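(* Let $Q=\{q_1,\ldots,q_n\}\subset\mathbb{P}^1$ be distinct points and $\vec g=(g_1,\ldots,g_n)$ effective divisors on $[0,1)$ of common degree $r$, $g_i=\sum_\alpha m_i(\alpha)[\alpha]$, with $\sum_{i,\alpha}m_i(\alpha)\alpha\in\mathbb{Z}$. Suppose the defect is zero, $r(n-2)-\sum_i T(g_i)=\delta(\vec g)=0$, but the superdefect is strictly positive, $\sigma(\vec g)>0$. Then it is possible to choose good arrangements $a_{i,1},\ldots,a_{i,r}$ of the $g_i$ and an integer $k_1$ such that, defining $k_2,\ldots,k_r$ by $k_{j+1}=\tau_j+k_j+2-n$, the parabolic bundle $E=\bigoplus_{j=1}^rE^j$, $E^j=[k_j;a_{1,j},\ldots,a_{n,j}]$, has $\deg^{\rm par}(E)=0$.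
   Context: A parabolic line bundle $[k;a_1,\ldots,a_n]$ ($k\in\mathbb{Z}$, $a_i\in[0,1)$) is $\mathcal{O}(k)$ with weight $a_i$ at $q_i$; its parabolic degree is $k+\sum_ia_i$, additive in direct sums. An arrangement of $g_i$ is a sequence $a_{i,1},\ldots,a_{i,r}\in[0,1)$ in which each $\alpha$ occurs $m_i(\alpha)$ times; indices modulo $r$. It is good if $\#\{t: a_{i,t}\ge a_{i,t+1}\}$ is minimal, the minimum being $T(g_i)$. $\tau_j=\#\{i: a_{i,j}\geq a_{i,j+1}\}$. With $\nu(g_i)=\max_\alpha m_i(\alpha)$, the superdefect is $\sigma(\vec g)=\sum_i\bigl(r^2-\sum_\alpha m_i(\alpha)^2-r(r-\nu(g_i))\bigr)$. *)

(* Defs.v *)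
From mathcomp Require Import all_boot all_order all_algebra.
Set Implicit Arguments. Unset Strict Implicit. Unset Printing Implicit Defensive.
Import Order.TTheory GRing.Theory Num.Theory.
Local Open Scope ring_scope.

(* An effective divisor of degree r on [0,1) is represented by any sequence
   of its points (with repetition) of length r; m(alpha) = count_mem alpha. *)
Definition mult (R : realFieldType) (g : seq R) (x : R) : nat := count_mem x g.

Definition cyc (R : realFieldType) (s : seq R) (t : nat) : R :=
  nth 0 s (t %% size s).

Definition descents (R : realFieldType) (s : seq R) : nat :=
  \sum_(t < size s) nat_of_bool (cyc s (t.+1) <= cyc s t)%R.

Definition arrangement (R : realFieldType) (g s : seq R) : bool := perm_eq s g.

Definition Tmin (R : realFieldType) (g : seq R) : nat :=
  \big[minn/descents g]_(s <- permutations g) descents s.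

Definition good_arrangement (R : realFieldType) (g s : seq R) : bool :=
  arrangement g s && (descents s == Tmin g).

Definition nu (R : realFieldType) (g : seq R) : nat :=
  \max_(x <- g) mult g x.

Definition sum_mult_sq (R : realFieldType) (g : seq R) : nat :=
  \sum_(x <- undup g) (mult g x) ^ 2.

Definition superdefect (R : realFieldType) (n r : nat) (g : 'I_n -> seq R) : int :=
  \sum_(i < n) ((r ^ 2)%:Z - (sum_mult_sq (g i))%:Z - (r%:Z * (r%:Z - (nu (g i))%:Z))).

Definition defect (R : realFieldType) (n r : nat) (g : 'I_n -> seq R) : int :=
  r%:Z * (n%:Z - 2) - \sum_(i < n) (Tmin (g i))%:Z.

Definition tau (R : realFieldType) (n : nat) (a : 'I_n -> seq R) (j : nat) : nat :=
  \sum_(i < n) nat_of_bool (cyc (a i) j.+1 <= cyc (a i) j)%R.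

(* k_0 = k1, k_{j+1} = tau_j + k_j + 2 - n  (0-indexed) *)
Fixpoint kseq (R : realFieldType) (n : nat) (a : 'I_n -> seq R) (k1 : int) (j : nat) : int :=
  match j with
  | 0 => k1
  | j'.+1 => (tau a j')%:Z + kseq a k1 j' + 2 - n%:Z
  end.

Definition pdeg_line (R : realFieldType) (n : nat) (k : int) (w : 'I_n -> R) : R :=
  k%:~R + \sum_(i < n) w i.

Definition pdeg_bundle (R : realFieldType) (n r : nat) (a : 'I_n -> seq R) (k1 : int) : R :=
  \sum_(j < r) pdeg_line (kseq a k1 j) (fun i => cyc (a i) j).

(* Main.v *)
Require Import Defs.
From mathcomp Require Import all_boot all_order all_algebra.
From mathcomp Require Import zify ring.
Set Implicit Arguments. Unset Strict Implicit.
Import Order.TTheory GRing.Theory Num.Theory.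
Local Open Scope ring_scope.

Section L.
Variable R : realFieldType.
Implicit Types s a b : seq R.

Fixpoint ld (s : seq R) : nat :=
  match s with x :: ((y :: _) as s') => nat_of_bool (y <= x) + ld s' | _ => 0%N end.
Fixpoint phi (s : seq R) : nat :=
  match s with x :: ((y :: _) as s') => (nat_of_bool (y <= x)%R * size s' + phi s')%N | _ => 0%N end.
Definition junc (a b : seq R) : nat :=
  match a, b with x :: a', y :: _ => nat_of_bool (y <= last x a') | _, _ => 0%N end.

Lemma ld_cons2 x y s : ld [:: x, y & s] = ((y <= x)%R + ld (y :: s))%N.
Proof. by []. Qed.
Lemma phi_cons2 x y s : phi [:: x, y & s] = ((y <= x)%R * (size s).+1 + phi (y :: s))%N.
Proof. by []. Qed.
Lemma ld1 x : ld [:: x] = 0%N. Proof. by []. Qed.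
Lemma phi1 x : phi [:: x] = 0%N. Proof. by []. Qed.

Lemma ld_cat a b : ld (a ++ b) = (ld a + junc a b + ld b)%N.
Proof.
elim: a => [|x a IH]; first by case: b.
case: a IH => [|y a] IH.
  by case: b {IH} => [|y b] //; rewrite cat1s ld_cons2 ld1.
by rewrite !cat_cons ld_cons2 -cat_cons IH ld_cons2 /junc; clear IH; case: b => [|z b]; rewrite ?[last x _]/=; lia.
Qed.

Lemma phi_cat a b : phi (a ++ b) = (phi a + size b * (ld a + junc a b) + phi b)%N.
Proof.
elim: a => [|x a IH]; first by case: b => [|y b] //=; rewrite muln0.
case: a IH => [|y a] IH.
  case: b {IH} => [|y b] //.
  by rewrite cat1s phi_cons2 ld1 phi1 /junc /=; lia.
rewrite !cat_cons phi_cons2 -cat_cons IH phi_cons2 ld_cons2 size_cat /junc /=.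
clear IH; case: b => [|z b] /=; nia.
Qed.

Lemma ld_nth s : ld s = (\sum_(t < (size s).-1) nat_of_bool (nth 0 s t.+1 <= nth 0 s t)%R)%N.
Proof.
elim: s => [|x s IH]; first by rewrite big_ord0.
case: s IH => [|y s] IH; first by rewrite big_ord0.
by rewrite ld_cons2 big_ord_recl IH.
Qed.

Lemma phi_nth s : phi s =
  (\sum_(j < size s) \sum_(l < j) nat_of_bool (nth 0 s l.+1 <= nth 0 s l)%R)%N.
Proof.
elim: s => [|x s IH]; first by rewrite big_ord0.
case: s IH => [|y s] IH; first by rewrite big_ord1 big_ord0.
rewrite phi_cons2 IH [RHS]big_ord_recl big_ord0 add0n.
under [RHS]eq_bigr => j _ do rewrite big_ord_recl.
by rewrite big_split /= sum_nat_const card_ord mulnC.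
Qed.

End L.

Section L2.
Variable R : realFieldType.
Implicit Types s a b : seq R.

Lemma descents_ld x s : descents (x :: s) = (ld (x :: s) + (x <= last x s)%R)%N.
Proof.
rewrite /descents ld_nth /= big_ord_recr /=.
congr (_ + _)%N.
  apply: eq_bigr => t _; rewrite /cyc /= !modn_small //.
    by have := ltn_ord t; lia.
  by have := ltn_ord t; lia.
rewrite /cyc /= modnn modn_small //.
by have := nth_last 0 (x :: s); rewrite /= => ->.
Qed.

Lemma count_ld_bound (be : R) x s :
  (count_mem be (x :: s) + (last x s < be)%R <= ld (x :: s) + (x <= be)%R)%N.
Proof.
elim: s x => [|y s IH] x.
  rewrite /= addn0; case: (ltrgtP x be) => //.
rewrite ld_cons2 /=.
have := IH y; rewrite /=.
case: (ltrgtP x be) => [xb|xb|->]; case: (ltrgtP y be) => [yb|yb|yb]; try lia.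
all: try by rewrite (le_trans (ltW yb) (ltW xb)); lia.
all: try by rewrite yb ltW //; lia.
all: try by rewrite (ltW yb); lia.
all: try by rewrite yb lexx; lia.
Qed.

Lemma descents_ge_count (be : R) s : (0 < size s)%N -> (count_mem be s <= descents s)%N.
Proof.
case: s => [|x s] // _.
rewrite descents_ld.
have := count_ld_bound be x s.
case: (leP x be) => xb; case: (ltP (last x s) be) => lb; try lia.
by rewrite (le_trans xb lb); lia.
Qed.

Lemma descents_rot1 s : descents (rot 1 s) = descents s.
Proof.
case: s => [|x [|y s]] //.
rewrite rot1_cons rcons_cons !descents_ld -cats1 -cat_cons ld_cat last_cat ld_cons2 /junc /=; lia.
Qed.

Lemma phi_rot1 x y s :
  (phi (rot 1 [:: x, y & s]) + (size s).+2 * (y <= x)%R = phi [:: x, y & s] + descents [:: x, y & s])%N.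
Proof.
rewrite rot1_cons rcons_cons -cats1 -cat_cons phi_cat descents_ld ld_cons2 phi_cons2 /junc /=.
case: s => [|z s] /=; nia.
Qed.

End L2.

Section L3.
Variable R : realFieldType.
Implicit Types s a b : seq R.

Lemma ld_lt s : sorted <%R s -> ld s = 0%N.
Proof.
elim: s => [|x s IH] //; case: s IH => [|y s] IH // /andP[xy hs].
by rewrite ld_cons2 IH // leNgt xy.
Qed.

Lemma phi_lt s : sorted <%R s -> phi s = 0%N.
Proof.
elim: s => [|x s IH] //; case: s IH => [|y s] IH // /andP[xy hs].
by rewrite phi_cons2 IH // leNgt xy.
Qed.

Lemma head_le (be x : R) s : sorted <%R (x :: s) -> be \in x :: s -> x <= be.
Proof.
move=> hs; rewrite inE => /orP[/eqP -> //|hb].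
have := order_path_min (@lt_trans _ _) hs => /allP /(_ _ hb) /ltW //.
Qed.

Lemma last_ge (be x : R) s : sorted <%R (x :: s) -> be \in x :: s -> be <= last x s.
Proof.
elim: s x be => [|y s IH] x be /=; first by rewrite inE => _ /eqP ->.
move=> /andP[xy hs]; rewrite inE => /orP[/eqP ->|hb]; last exact: IH.
apply: le_trans (IH y y hs (mem_head _ _)); exact: ltW.
Qed.

Variable F : nat -> seq R.
Variable be : R.
Hypothesis Fs : forall u, sorted <%R (F u).

Lemma flat_ld_phi k j (Fb : forall u, (k <= u)%N -> (u < k + j)%N -> be \in F u) :
  ld (flatten [seq F u | u <- iota k j]) = j.-1 /\
  phi (flatten [seq F u | u <- iota k j]) = (\sum_(u <- iota k j) (u - k) * size (F u))%N.
Proof.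
elim: j k Fb => [|j IH] k Fb; first by rewrite big_nil.
case: j IH Fb => [|j] IH Fb.
  rewrite /= cats0 big_cons big_nil subnn mul0n; split; [exact: ld_lt | exact: phi_lt].
have [IHl IHp] := IH k.+1 (fun u h1 h2 => Fb u (ltnW h1) ltac:(lia)).
rewrite (_ : iota k j.+2 = k :: iota k.+1 j.+1) // map_cons [flatten (_ :: _)]/=.
rewrite ld_cat phi_cat IHl IHp ld_lt //.
have junc1 : junc (F k) (flatten [seq F u | u <- iota k.+1 j.+1]) = 1%N.
  have := Fb k (leqnn _) ltac:(lia); have := Fs k; case: (F k) => [|x a] //= sa ba.
  have := Fb k.+1 ltac:(lia) ltac:(lia); have := Fs k.+1; case: (F k.+1) => [|y c] //= sc bc.
  by rewrite (le_trans (head_le sc bc) (last_ge sa ba)).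
rewrite junc1 (phi_lt (Fs k)); split; first by [].
have -> : size (flatten [seq F u | u <- iota k.+1 j.+1]) = (\sum_(u <- iota k.+1 j.+1) size (F u))%N.
  by rewrite size_flatten /shape -map_comp sumnE big_map.
rewrite big_cons subnn mul0n !add0n muln1 -big_split /=.
rewrite big_seq_cond [RHS]big_seq_cond; apply: eq_bigr => u /andP[].
rewrite -[_ :: iota _ _]/(iota k.+1 j.+1) mem_iota => /andP[ku _] _.
rewrite -mulSn; congr (_ * _)%N; lia.
Qed.
End L3.

Lemma count_or_iota a b n : (a <= b)%N ->
  count (fun u => (u < a)%N || (u == b)) (iota 0 n) = (minn a n + (b < n))%N.
Proof.
move=> ab; elim: n => [|n IH]; first by rewrite /= minn0.
rewrite -addn1 iotaD count_cat IH /= addn0 add0n.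
case: (ltngtP n a) => na; case: (ltngtP n b) => nb; lia.
Qed.

Lemma sum_or_iota a b n : (a <= b)%N ->
  (\sum_(u <- iota 0 n) u * ((u < a)%N || (u == b)))%N =
  (\sum_(u <- iota 0 n) u * (u < a)%N + (b < n) * b)%N.
Proof.
move=> ab; elim: n => [|n IH]; first by rewrite !big_nil.
rewrite -addn1 iotaD !big_cat IH /= !big_cons !big_nil /= !addn0 add0n.
case: (ltngtP n a) => na; case: (ltngtP n b) => nb; try lia.
Qed.

Lemma count_sum_nat (T : Type) (p : pred T) (s : seq T) :
  count p s = (\sum_(y <- s) nat_of_bool (p y))%N.
Proof. by rewrite -sumn_count sumnE big_map. Qed.

Section Cons.
Variable R : realFieldType.
Variable g : seq R.
Variable be : R.
Variable nu : nat.
Variable w : R -> nat.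
Local Notation m y := (count_mem y g).
Hypothesis hbe : m be = nu.
Hypothesis nu_pos : (0 < nu)%N.
Hypothesis hw : forall y, y \in g -> ((m y - 1 <= w y)%N && (w y < nu)%N).

Definition vs := sort <=%R (undup g).
Definition Pr (y : R) (u : nat) := (u < m y - 1)%N || (u == w y).
Definition run u := [seq y <- vs | Pr y u].
Definition consw := flatten [seq run u | u <- iota 0 nu].

Lemma vs_lt : sorted <%R vs.
Proof. by rewrite /vs sort_lt_sorted undup_uniq. Qed.

Lemma mem_vs y : (y \in vs) = (y \in g).
Proof. by rewrite /vs mem_sort mem_undup. Qed.

Lemma be_in : be \in g.
Proof. by apply/negPn/negP => /count_memPn; lia. Qed.

Lemma run_lt u : sorted <%R (run u).
Proof. exact: lt_sorted_filter vs_lt. Qed.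

Lemma be_run u : (u < nu)%N -> be \in run u.
Proof.
move=> un; rewrite mem_filter mem_vs be_in andbT /Pr.
have := hw be_in; rewrite hbe; lia.
Qed.

Lemma cons_perm : perm_eq consw g.
Proof.
rewrite /perm_eq; apply/allP => z _; apply/eqP.
rewrite /consw count_flatten -map_comp.
have -> : [seq (count_mem z \o run) i | i <- iota 0 nu] =
          [seq nat_of_bool ((z \in g) && Pr z u) | u <- iota 0 nu].
  apply: eq_map => u /=; rewrite count_uniq_mem; last first.
    by apply: filter_uniq; rewrite /vs sort_uniq undup_uniq.
  by rewrite mem_filter mem_vs andbC.
rewrite sumn_count.
case: (boolP (z \in g)) => zg; last first.
  by rewrite (count_memPn zg) (eq_count (a2 := pred0)) ?count_pred0.
rewrite (eq_count (a2 := Pr z)) //.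
have := hw zg => /andP[h1 h2].
rewrite count_or_iota // h2.
have : (0 < m z)%N by rewrite -has_count has_pred1.
lia.
Qed.

Lemma cons_descents : (descents consw <= nu)%N.
Proof.
have [hl _] := @flat_ld_phi _ run be run_lt 0 nu (fun u _ h => be_run h).
rewrite -/consw in hl.
have : be \in consw.
  apply/flattenP; exists (run 0); last exact: be_run.
  by apply/mapP; exists 0%N => //; rewrite mem_iota; lia.
case: consw hl => [|x s] // hl _.
rewrite descents_ld hl; case: (x <= last x s)%R => /=; lia.
Qed.

Lemma cons_phi : phi consw =
  ((\sum_(y <- vs) \sum_(u <- iota 0 nu) u * (u < m y - 1)%N) + \sum_(y <- vs) w y)%N.
Proof.
have [_ hp] := @flat_ld_phi _ run be run_lt 0 nu (fun u _ h => be_run h).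
rewrite /consw hp.
under eq_bigr => u _ do rewrite subn0 size_filter count_sum_nat big_distrr.
rewrite exchange_big -big_split /=.
rewrite big_seq [RHS]big_seq; apply: eq_bigr => y yv.
rewrite mem_vs in yv; have := hw yv => /andP[h1 h2].
by rewrite /Pr (sum_or_iota _ h1) h2 mul1n.
Qed.

End Cons.

Lemma bigmin_le (T : eqType) (l : seq T) (F : T -> nat) x0 s :
  s \in l -> (\big[minn/x0]_(p <- l) F p <= F s)%N.
Proof.
elim: l => [|p l IH] //; rewrite inE big_cons => /orP[/eqP <-|h].
  exact: geq_minl.
exact: leq_trans (geq_minr _ _) (IH h).
Qed.

Lemma bigmin_ge (T : eqType) (l : seq T) (F : T -> nat) x0 c :
  (c <= x0)%N -> (forall p, p \in l -> c <= F p)%N -> (c <= \big[minn/x0]_(p <- l) F p)%N.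
Proof.
move=> h0; elim: l => [|p l IH] h; first by rewrite big_nil.
rewrite big_cons leq_min h ?mem_head // IH // => q hq.
by apply: h; rewrite inE hq orbT.
Qed.

Lemma bigmin_attained (T : eqType) (l : seq T) (F : T -> nat) x0 :
  \big[minn/x0]_(p <- l) F p = x0 \/ exists2 p, p \in l & \big[minn/x0]_(p <- l) F p = F p.
Proof.
elim: l => [|p l IH]; first by left; rewrite big_nil.
rewrite big_cons; case: IH => [->|[q hq ->]].
  case: (leqP (F p) x0) => h.
    by right; exists p; [exact: mem_head | lia].
  by left; lia.
case: (leqP (F p) (F q)) => h.
  by right; exists p; [exact: mem_head | lia].
by right; exists q; [rewrite inE hq orbT | lia].
Qed.

Section T.
Variable R : realFieldType.
Implicit Types s g : seq R.

Lemma Tmin_attained g : exists2 s, perm_eq s g & descents s = Tmin g.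
Proof.
rewrite /Tmin; case: (bigmin_attained (permutations g) (@descents R) (descents g)) => [->|[p hp ->]].
  by exists g.
by exists p => //; rewrite mem_permutations in hp.
Qed.

Lemma Tmin_eq g (be : R) s : perm_eq s g -> (0 < size g)%N ->
  (descents s <= count_mem be g)%N -> Tmin g = descents s /\ descents s = count_mem be g.
Proof.
move=> hs hg hd.
have h1 : (Tmin g <= descents s)%N by apply: bigmin_le; rewrite mem_permutations.
have h2 : (count_mem be g <= Tmin g)%N.
  apply: bigmin_ge; first exact: (descents_ge_count be hg).
  move=> p; rewrite mem_permutations => hp.
  rewrite -(permP hp); apply: descents_ge_count; by rewrite (perm_size hp).
split; apply/eqP; rewrite eqn_leq; apply/andP; split; lia.
Qed.

Lemma phi_rot1_gen s : (0 < size s)%N -> exists b : nat,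
  (phi (rot 1 s) + size s * b = phi s + descents s)%N.
Proof.
case: s => [|x [|y s]] // _.
  by exists 1%N; rewrite descents_ld /= lexx.
by exists (nat_of_bool (y <= x)%R); rewrite phi_rot1.
Qed.

Definition rotk k s := iter k (rot 1) s.

Lemma rotk_props k s : (0 < size s)%N ->
  [/\ perm_eq (rotk k s) s, descents (rotk k s) = descents s, size (rotk k s) = size s &
   exists q : int, (phi (rotk k s))%:Z = (phi s)%:Z + (k * descents s)%:Z - q * (size s)%:Z].
Proof.
move=> hs; elim: k => [|k [IHp IHd IHs [q IHq]]].
  by split => //; exists 0; rewrite /= subr0 addr0.
rewrite /rotk iterS -/(rotk k s).
have hs' : (0 < size (rotk k s))%N by rewrite IHs.
have [b hb] := phi_rot1_gen hs'.
split.
- by rewrite perm_rot.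
- by rewrite descents_rot1.
- by rewrite size_rot.
exists (q + b%:Z).
have hb' : ((phi (rot 1 (rotk k s)))%:Z = (phi (rotk k s))%:Z + (descents (rotk k s))%:Z - (size (rotk k s) * b)%:Z)%R.
  by move: hb; lia.
rewrite hb' IHq IHd IHs mulSn !PoszD !PoszM; lia.
Qed.

End T.

Lemma choose_w (T : eqType) (l : seq T) (lo hi : T -> nat) (t : nat) :
  uniq l -> (forall y, y \in l -> lo y <= hi y)%N ->
  (\sum_(y <- l) lo y <= t <= \sum_(y <- l) hi y)%N ->
  exists w : T -> nat, (forall y, y \in l -> lo y <= w y <= hi y)%N /\ (\sum_(y <- l) w y)%N = t.
Proof.
elim: l t => [|x l IH] t.
  by rewrite !big_nil => _ _ ht; exists (fun _ => 0%N); split => //; rewrite big_nil; lia.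
rewrite /= => /andP[xl ul] hlh; rewrite !big_cons => ht.
set wx := (lo x + minn (hi x - lo x) (t - \sum_(y <- l) lo y - lo x))%N.
have hx := hlh x (mem_head _ _).
have hl : forall y, y \in l -> (lo y <= hi y)%N by move=> y hy; apply: hlh; rewrite inE hy orbT.
have hs : (\sum_(y <- l) lo y <= \sum_(y <- l) hi y)%N.
  by rewrite big_seq [X in (_ <= X)%N]big_seq; apply: leq_sum => y; apply: hl.
have [w [hw1 hw2]] := IH (t - wx)%N ul hl ltac:(lia).
exists (fun y => if y == x then wx else w y); split.
  move=> y; rewrite inE; case: eqP => [-> _|_ /= hy]; first by lia.
  exact: hw1.
rewrite big_cons eqxx.
rewrite (eq_big_seq w); first by lia.
by move=> y hy /=; case: eqP => // eyx; move: xl; rewrite -eyx hy.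
Qed.

Lemma NT (r nu : nat) (D : nat) (a : nat) (b : int) :
  (0 < r)%N -> (0 < D)%N -> D%:Z = (a * nu)%:Z + b * r%:Z ->
  forall N : int, exists t k : nat, exists q : int,
    (t <= D)%N /\ N = t%:Z + (k * nu)%:Z + q * r%:Z.
Proof.
move=> r0 D0 hD.
have pos : forall N : nat, exists t k : nat, exists q : int,
    (t <= D)%N /\ N%:Z = t%:Z + (k * nu)%:Z + q * r%:Z.
  elim/ltn_ind => N IH.
  case: (leqP N D) => hND.
    by exists N, 0%N, 0; split => //; rewrite mul0n mul0r !addr0.
  have [t [k [q [ht hN]]]] := IH (N - D)%N ltac:(lia).
  exists t, (k + a)%N, (q + b); split => //.
  move: hN hD; rewrite !PoszM mulrDl; lia.
move=> N.
case: N => [N|N]; first exact: pos.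
have [t [k [q [ht hN]]]] := pos (r * N.+1 - N.+1)%N.
exists t, k, (q - N.+1%:Z); split => //.
have h : (N.+1 <= r * N.+1)%N by rewrite leq_pmull.
move: hN; rewrite NegzE; lia.
Qed.

Lemma sum_count_undup (T : eqType) (s : seq T) :
  (\sum_(y <- undup s) count_mem y s)%N = size s.
Proof.
rewrite -sum1_size -(big_undup_iterop_count _ _ _ (fun _ => 1%N)).
apply: eq_bigr => y _; set k := count_mem y s.
case: k => // k; rewrite /iterop /=.
by elim: k => // k /= ->.
Qed.

Section N.
Variable R : realFieldType.
Implicit Types g : seq R.

Lemma le_nu g y : (mult g y <= nu g)%N.
Proof.
case: (boolP (y \in g)) => hy; first exact: leq_bigmax_seq.
by rewrite /mult (count_memPn hy).
Qed.

Lemma nu_attained g : (0 < size g)%N -> exists2 be, be \in g & mult g be = nu g.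
Proof.
rewrite /nu; set F := mult g.
suff H : forall l : seq R, (0 < size l)%N -> exists2 be, be \in l & F be = (\max_(x <- l) F x)%N.
  exact: H.
elim => [|x l IH] // _.
rewrite big_cons; case: l IH => [|y l] IH.
  by exists x; rewrite ?mem_head // big_nil maxn0.
have [be hb <-] := IH isT.
case: (leqP (F be) (F x)) => h.
  by exists x; [exact: mem_head | lia].
by exists be; [rewrite inE hb orbT | lia].
Qed.

Lemma nonuniform g : (sum_mult_sq g < size g * nu g)%N ->
  exists2 x, x \in g & (mult g x < nu g)%N.
Proof.
move=> h; case: (boolP (has (fun x => mult g x < nu g)%N g)) => [/hasP //|].
rewrite -all_predC => /allP H.
have : (size g * nu g <= sum_mult_sq g)%N.
  rewrite /sum_mult_sq -sum_count_undup big_distrl /= big_seq [X in (_ <= X)%N]big_seq.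
  apply: leq_sum => x; rewrite mem_undup => /H /=; rewrite -leqNgt /mult => hx.
  by rewrite expnS expn1 leq_mul2l hx orbT.
lia.
Qed.
End N.

Section M.
Variable R : realFieldType.
Variable n : nat.

Lemma kseqE (a : 'I_n -> seq R) k1 j :
  kseq a k1 j = k1 + \sum_(l < j) ((tau a l)%:Z + 2 - n%:Z).
Proof.
elim: j => [|j IH]; first by rewrite big_ord0 addr0.
rewrite /= IH big_ord_recr /=.
ring.
Qed.

Lemma sum_cyc (s : seq R) r : size s = r -> \sum_(j < r) cyc s j = \sum_(x <- s) x.
Proof.
move=> hs; rewrite (big_nth 0) big_mkord hs; apply: eq_bigr => j _.
by rewrite /cyc hs modn_small.
Qed.

Lemma sum_undup (s : seq R) : \sum_(x <- s) x = \sum_(x <- undup s) (mult s x)%:R * x.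
Proof.
rewrite -big_undup_iterop_count; apply: eq_bigr => x _.
rewrite Monoid.iteropE /mult; elim: (count_mem x s) => [|k IHk]; first by rewrite mul0r.
by rewrite iterS IHk -addn1 natrD mulrDl mul1r addrC.
Qed.

Lemma sum_tau (a : 'I_n -> seq R) r : (forall i, size (a i) = r) ->
  (\sum_(j < r) \sum_(l < j) tau a l = \sum_i phi (a i))%N.
Proof.
move=> hs.
under [RHS]eq_bigr => i _ do rewrite phi_nth hs.
rewrite [RHS]exchange_big /=; apply: eq_bigr => j _.
rewrite [RHS]exchange_big /=; apply: eq_bigr => l _.
apply: eq_bigr => i _; rewrite /cyc hs !modn_small //.
  by have := ltn_ord l; have := ltn_ord j; lia.
by have := ltn_ord l; have := ltn_ord j; lia.
Qed.

Lemma Posz_sum (I : Type) (l : seq I) (F : I -> nat) :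
  ((\sum_(i <- l) F i)%N)%:Z = \sum_(i <- l) (F i)%:Z.
Proof. by elim: l => [|x l IH]; rewrite ?big_nil // !big_cons PoszD IH. Qed.

Lemma pdeg_formula (a g : 'I_n -> seq R) r k1 :
  (forall i, size (a i) = r) -> (forall i, perm_eq (a i) (g i)) ->
  pdeg_bundle r a k1 = ((r%:Z * k1 + (\sum_i phi (a i))%N%:Z
      + \sum_(j < r) \sum_(l < j) (2 - n%:Z))%:~R + \sum_i \sum_(x <- g i) x).
Proof.
move=> hs hp.
rewrite /pdeg_bundle /pdeg_line big_split /=; congr (_ + _).
  rewrite -rmorph_sum /=; congr (_%:~R).
  under eq_bigr => j _ do rewrite kseqE.
  rewrite big_split /= sumr_const card_ord -(sum_tau hs).
  have -> : ((\sum_(j < r) \sum_(l < j) tau a l)%N : int) = \sum_(j < r) \sum_(l < j) (tau a l)%:Z.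
    rewrite -natz natr_sum; apply: eq_bigr => j _.
    by rewrite natr_sum; apply: eq_bigr => l _; rewrite natz.
  rewrite -addrA; congr (_ + _); first by rewrite -mulr_natl natz.
  rewrite -big_split /=; apply: eq_bigr => j _.
  by rewrite -big_split /=; apply: eq_bigr => l _; ring.
rewrite exchange_big /=; apply: eq_bigr => i _.
by rewrite (sum_cyc (hs i)) (perm_big _ (hp i)).
Qed.

End M.

Definition base (R : realFieldType) (g : seq R) :=
  head g [seq p <- permutations g | descents p == Tmin g].

Lemma base_good (R : realFieldType) (g : seq R) :
  perm_eq (base g) g /\ descents (base g) = Tmin g.
Proof.
have [s hs hd] := Tmin_attained g.
have : s \in [seq p <- permutations g | descents p == Tmin g].
  by rewrite mem_filter mem_permutations hs hd eqxx.
rewrite /base; case E: [seq p <- _ | _] => [|p l] //= _.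
have : p \in [seq p <- permutations g | descents p == Tmin g] by rewrite E mem_head.
by rewrite mem_filter mem_permutations => /andP[/eqP -> ->].
Qed.

Theorem theorem6p9 (R : realFieldType) (n r : nat) (g : 'I_n -> seq R)
  (hsize : forall i, size (g i) = r)
  (hrange : forall i, all (fun x => (0 <= x) && (x < 1)) (g i))
  (hint : exists z : int,
      \sum_(i < n) \sum_(x <- undup (g i)) (mult (g i) x)%:R * x = z%:~R)
  (hdefect : defect r g = 0)
  (hsuper : 0 < superdefect r g) :
  exists (a : 'I_n -> seq R) (k1 : int),
    (forall i, good_arrangement (g i) (a i)) /\ pdeg_bundle r a k1 = 0.
Proof.
have [z hz] := hint.
have [i0 hi0] : exists i0, (sum_mult_sq (g i0) < r * nu (g i0))%N.
  case: (pickP (fun i => sum_mult_sq (g i) < r * nu (g i))%N) => [i0 hi0|hn]; first by exists i0.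
  exfalso; move: hsuper; rewrite /superdefect.
  have : \sum_(i < n) ((r ^ 2)%:Z - (sum_mult_sq (g i))%:Z - (r%:Z * (r%:Z - (nu (g i))%:Z))) <= \sum_(i < n) (0 : int).
    apply: ler_sum => i _; have := hn i => /= /negbT; rewrite -leqNgt => h.
    have h' : (r%:Z * (nu (g i))%:Z <= (sum_mult_sq (g i))%:Z) by rewrite -PoszM lez_nat.
    have -> : ((r ^ 2)%N%:Z = r%:Z * r%:Z) by rewrite -PoszM expnS expn1.
    lia.
  by rewrite big1_eq => h1 h2; have := lt_le_trans h2 h1; rewrite ltxx.
set g0 := g i0.
have hs0 : size g0 = r by rewrite /g0 hsize.
have r0 : (0 < r)%N by move: hi0; case: (r) => //.
have [x0 hx0 hx0nu] := nonuniform (R:=R) (g:=g0) ltac:(by rewrite hs0).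
have [be hbe hbenu] := nu_attained (g:=g0) ltac:(by rewrite hs0).
set nu0 := nu g0.
have nu0p : (0 < nu0)%N by rewrite /nu0; lia.
set m := fun y => count_mem y g0.
have hm : forall y, y \in g0 -> (0 < m y <= nu0)%N.
  move=> y hy; rewrite /m -has_count has_pred1 hy /=; exact: le_nu.
set vs0 := vs g0.
have vsu : uniq vs0 by rewrite /vs0 /vs sort_uniq undup_uniq.
have vsm : forall y, (y \in vs0) = (y \in g0) by move=> y; rewrite /vs0 mem_vs.
have sum_m : (\sum_(y <- vs0) m y)%N = r.
  by rewrite /vs0 /vs (perm_big _ (permEl (perm_sort _ _))) /= sum_count_undup.
set K := (\sum_(y <- vs0) \sum_(u <- iota 0 nu0) u * (u < m y - 1)%N)%N.
set L := (\sum_(y <- vs0) (m y - 1))%N.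
set D := (\sum_(y <- vs0) (nu0 - m y))%N.
set V := size vs0.
have hU : (\sum_(y <- vs0) (nu0 - 1))%N = (L + D)%N.
  rewrite -big_split /= big_seq [RHS]big_seq; apply: eq_bigr => y; rewrite vsm => /hm; lia.
have hD : D%:Z = (V * nu0)%N%:Z + (-1) * r%:Z.
  have : (D + r)%N = (V * nu0)%N.
    rewrite -sum_m -big_split /= -[V]count_predT -sum1_count big_distrl /=.
    rewrite big_seq [RHS]big_seq; apply: eq_bigr => y; rewrite vsm => /hm; lia.
  lia.
have D0 : (0 < D)%N.
  rewrite /D (bigD1_seq x0) //=; last by rewrite vsm.
  have := hm x0 hx0; rewrite /m /mult in hx0nu *; lia.
set P0 := (\sum_(i < n | i != i0) phi (base (g i)))%N.
set C0 := \sum_(j < r) \sum_(l < j) (2 - n%:Z).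
have [t' [k [q [ht' hN]]]] := NT r0 D0 hD (- ((P0 + K + L)%N%:Z + C0 + z)).
have hlh : forall y, y \in vs0 -> (m y - 1 <= nu0 - 1)%N.
  move=> y; rewrite vsm => /hm.
  lia.
have hrng : (L <= L + t' <= \sum_(y <- vs0) (nu0 - 1))%N by rewrite hU; lia.
have [w [hw1 hw2]] := @choose_w _ vs0 (fun y => m y - 1)%N (fun y => nu0 - 1)%N (L + t') vsu hlh hrng.
have hwc : forall y, y \in g0 -> ((count_mem y g0 - 1 <= w y)%N && (w y < nu0)%N).
  move=> y hy; change (m y - 1 <= w y < nu0)%N.
  have := hw1 y; rewrite vsm => /(_ hy) /=; have := hm y hy; lia.
have hbe' : count_mem be g0 = nu0 by [].
set s0 := consw g0 nu0 w.
have s0p : perm_eq s0 g0 := cons_perm hbe' nu0p hwc.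
have s0d : (descents s0 <= count_mem be g0)%N by rewrite hbe'; exact: (cons_descents hbe' nu0p hwc).
have s0phi : phi s0 = (K + (L + t'))%N by rewrite (cons_phi hbe' nu0p hwc) hw2.
have [Tm0 d0] := Tmin_eq s0p ltac:(by rewrite hs0) s0d.
have s0s : size s0 = r by rewrite (perm_size s0p).
have [A0p A0d A0s [q2 A0phi]] := rotk_props k (ltac:(by rewrite s0s) : (0 < size s0)%N).
set A0 := rotk k s0.
pose a := fun i => if i == i0 then A0 else base (g i).
have ha_size : forall i, size (a i) = r.
  move=> i; rewrite /a; case: eqP => _; first by rewrite A0s.
  by have [hp _] := base_good (g i); rewrite (perm_size hp).
have ha_perm : forall i, perm_eq (a i) (g i).
  move=> i; rewrite /a; case: eqP => [->|_]; last by have [hp _] := base_good (g i).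
  exact: perm_trans A0p s0p.
have ha_good : forall i, good_arrangement (g i) (a i).
  move=> i; rewrite /good_arrangement /arrangement ha_perm /=; rewrite /a; case: (i =P i0) => [->|_].
    by rewrite A0d -Tm0.
  by have [_ ->] := base_good (g i).
exists a, (q + q2); split => //.
rewrite (pdeg_formula _ ha_size ha_perm).
have -> : \sum_i \sum_(x <- g i) x = z%:~R.
  by rewrite -hz; apply: eq_bigr => i _; exact: sum_undup.
rewrite -intrD.
have hsum : (\sum_i phi (a i))%N = (phi A0 + P0)%N.
  rewrite (bigD1 i0) //= {1}/a eqxx; congr (_ + _)%N.
  by apply: eq_bigr => i /negbTE; rewrite /a => ->.
suff -> : r%:Z * (q + q2) + (\sum_i phi (a i))%N%:Z + C0 + z = 0 by [].
rewrite hsum PoszD A0phi s0phi s0s d0 hbe'.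
move: hN; rewrite !PoszD !PoszM; nia.
Qed.
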